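(* For $n\ge3$ and every integer $\ell$ with $0<\ell\le d-1$, one has $N(\ell)=0$.
   Context: Sylvester numbers: $s_0=2$, $s_{k+1}=1+\prod_{i=0}^ks_i$. Fix $n$, $d=\prod_{i=0}^ns_i$, $a_i=d/s_i$ for $0\le i\le n$, $a_{n+1}=1$. For $\ell\in\{0,\dots,d-1\}$ let $\tilde\theta_i(\ell)=\{\ell/s_i\}$ (fractional part) for $0\le i\le n$ and $\tilde\theta_{n+1}(\ell)=\ell/d$; $T_0(\ell)=\{i\in\{0,\dots,n+1\}:\tilde\theta_i(\ell)=0\}$, $T_1(\ell)=\{0,\dots,n+1\}\setminus T_0(\ell)$; $A(\ell)=\sum_{i\in T_1(\ell)}(\frac d2-a_i)$, $B(\ell)=\sum_{i\in T_1(\ell)}(d\tilde\theta_i(\ell)-\frac d2)$. $N(\ell)$ is the number of integer tuples $(k_i)_{i\in T_0(\ell)}$ with $0\le k_i\le s_i-2$ for $0\le i\le n$ and $0\le k_{n+1}\le d-2$ (if $n+1\in T_0(\ell)$), such that $A(\ell)+\sum_{i\in T_0(\ell)}k_ia_i=d$ and $B(\ell)=0$ (so $N(\ell)=0$ if $B(\ell)\ne0$). *)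

(* Defs.v *)
From HB Require Import structures.
From mathcomp Require Import all_boot all_order all_algebra.
Unset Printing Implicit Defensive.
Import Order.TTheory GRing.Theory Num.Theory.

Fixpoint sylv_prod (k : nat) : nat :=
  match k with
  | 0 => 2
  | k'.+1 => sylv_prod k' * (sylv_prod k').+1
  end.

Definition sylv (k : nat) : nat :=
  match k with
  | 0 => 2
  | k'.+1 => (sylv_prod k').+1
  end.

Lemma sylv_prodE k : sylv_prod k = \prod_(i < k.+1) sylv i.
Proof.
elim: k => [|k IH]; first by rewrite big_ord_recr big_ord0.
by rewrite big_ord_recr /= -IH.
Qed.

Lemma sylv0 : sylv 0 = 2. Proof. by []. Qed.
Lemma sylvS k : sylv k.+1 = (\prod_(i < k.+1) sylv i).+1.
Proof. by rewrite /= sylv_prodE. Qed.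

Local Open Scope ring_scope.

Definition dd (n : nat) : nat := \prod_(i < n.+1) sylv i.

(* indices 0..n+1 are 'I_(n.+2) *)
Definition aa (n : nat) (i : 'I_n.+2) : nat :=
  if (i <= n)%N then (dd n %/ sylv i)%N else 1%N.

Definition frac_rat (q : rat) : rat := q - (Num.floor q)%:~R.

Definition theta (n : nat) (l : nat) (i : 'I_n.+2) : rat :=
  if (i <= n)%N then frac_rat (l%:R / (sylv i)%:R) else l%:R / (dd n)%:R.

Definition T0 (n l : nat) : {set 'I_n.+2} := [set i | theta n l i == 0].
Definition T1 (n l : nat) : {set 'I_n.+2} := ~: T0 n l.

Definition AA (n l : nat) : rat :=
  \sum_(i in T1 n l) ((dd n)%:R / 2 - (aa n i)%:R).
Definition BB (n l : nat) : rat :=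
  \sum_(i in T1 n l) ((dd n)%:R * theta n l i - (dd n)%:R / 2).

Definition kbound (n : nat) (i : 'I_n.+2) : nat :=
  if (i <= n)%N then (sylv i - 2)%N else (dd n - 2)%N.

(* Tuples (k_i)_{i in T0} are encoded as functions on all indices vanishing
   outside T0; all admissible values are < d, so 'I_(dd n) suffices. *)
Definition Nset (n l : nat) : {set {ffun 'I_n.+2 -> 'I_(dd n)}} :=
  [set k : {ffun 'I_n.+2 -> 'I_(dd n)} | [forall i, (i \notin T0 n l) ==> (val (k i) == 0%N)]
        && [forall i, (i \in T0 n l) ==> (val (k i) <= kbound n i)%N]
        && (AA n l + \sum_(i in T0 n l) ((val (k i) * aa n i)%N)%:R == (dd n)%:R)
        && (BB n l == 0)].

Definition NN (n l : nat) : nat := #|Nset n l|.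

(* Main.v *)
Require Import Defs.
From mathcomp Require Import all_boot all_order all_algebra.
From mathcomp Require Import zify ring lra.
Import Order.TTheory GRing.Theory Num.Theory.

Lemma P_pos n : (0 < sylv_prod n)%N.
Proof. by elim: n => //= n IH; rewrite muln_gt0 IH. Qed.

Lemma sylv_gt1 i : (1 < sylv i)%N.
Proof. by case: i => //= k; rewrite ltnS P_pos. Qed.

Lemma ddE n : dd n = sylv_prod n.
Proof. by rewrite /dd sylv_prodE. Qed.

Lemma dvd_sylv_P i n : (i <= n)%N -> sylv i %| sylv_prod n.
Proof.
elim: n => [|n IH]; first by rewrite leqn0 => /eqP->.
rewrite leq_eqVlt => /orP[/eqP->|/IH h]; first by rewrite /= dvdn_mull.
by rewrite /= dvdn_mulr.
Qed.
Arguments dvd_sylv_P {i n}.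

Lemma coprime_sylv i j : (i < j)%N -> coprime (sylv i) (sylv j).
Proof.
case: j => // j lt; rewrite /=.
exact: (coprime_dvdl (@dvd_sylv_P i j lt) (coprimenS _)).
Qed.

Lemma sylv_odd i : (0 < i)%N -> odd (sylv i).
Proof.
case: i => // k _ /=; rewrite -dvdn2; exact: (dvd_sylv_P (leq0n k)).
Qed.

Lemma P3 i n : (i <= n)%N -> sylv i %| sylv_prod n %/ sylv i + 1.
Proof.
elim: n => [|n IH]; first by rewrite leqn0 => /eqP->.
rewrite leq_eqVlt => /orP[/eqP->|lt].
  by rewrite /= mulnK // addn1.
have h := IH lt; have hd := @dvd_sylv_P i n lt.
rewrite /= -divn_mulAC //.
have -> : forall a b, a * b.+1 + 1 = (a + 1) + a * b by move=> a b; lia.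
by rewrite dvdn_add // dvdn_mull.
Qed.

Lemma P2 i j n : (i <= n)%N -> (j <= n)%N -> i != j -> sylv i %| sylv_prod n %/ sylv j.
Proof.
move=> hi hj hij.
rewrite dvdn_divRL ?(@dvd_sylv_P j n hj) // Gauss_dvd ?(@dvd_sylv_P j n hj) ?(@dvd_sylv_P i n hi) //.
case: (ltngtP i j) hij => // h _; first exact: coprime_sylv.
by rewrite coprime_sym coprime_sylv.
Qed.

Lemma P5 n : (\sum_(i < n.+1) (sylv_prod n %/ sylv i) = sylv_prod n - 1)%N.
Proof.
elim: n => [|n IH]; first by rewrite big_ord1.
rewrite big_ord_recr /=.
rewrite (eq_bigr (fun i : 'I_n.+1 => sylv_prod n %/ sylv i * (sylv_prod n).+1)); last first.
  move=> i _; rewrite divn_mulAC //; exact: (@dvd_sylv_P i n (ltn_ord i)).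
rewrite -big_distrl /= IH mulnK //.
have := P_pos n; set x := sylv_prod n; nia.
Qed.
Local Open Scope ring_scope.
Theorem lemma6p8 (n : nat) (hn : (3 <= n)%N) (l : nat)
  (hl0 : (0 < l)%N) (hl1 : (l <= dd n - 1)%N) : NN n l = 0%N.
Proof.
apply/eqP; rewrite cards_eq0 -subset0; apply/subsetP => k.
rewrite inE => /andP[/andP[/andP[/forallP H0 /forallP Hb] /eqP Heq] _].
suff: False by [].
have hd : (0 < dd n)%N by rewrite ddE P_pos.
have aaE : forall i : 'I_n.+2, (i <= n)%N -> aa n i = (sylv_prod n %/ sylv i)%N.
  by move=> i hi; rewrite /aa hi ddE.
have aaM : aa n ord_max = 1%N by rewrite /aa /= ltnn.
have hlast : ord_max \notin T0 n l.
  rewrite inE /theta /= ltnn mulf_eq0 invr_eq0 !pnatr_eq0.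
  by rewrite negb_or -!lt0n hl0 hd.
have T0le : forall i, i \in T0 n l -> (i <= n)%N.
  move=> i iT; have : i != ord_max by apply: contraNneq hlast => <-.
  by case: i {iT} => i hi /=; rewrite -val_eqE /= => hne; lia.
have HK : \sum_(i in T0 n l) ((val (k i) * aa n i)%N)%:R
   = ((\sum_(i in T0 n l) (val (k i) * aa n i))%N%:R : rat) by rewrite natr_sum.
set K := (\sum_(i in T0 n l) _)%N in HK.
rewrite HK in Heq.
case: (boolP [exists i : 'I_n.+2, (i \in T0 n l) && (0 < val i)%N]).
  move=> /existsP[i /andP[iT0 ipos]].
  have iln := T0le i iT0.
  set SA := (\sum_(j in T1 n l) aa n j)%N.
  have HA : AA n l = #|T1 n l|%:R * ((dd n)%:R / 2) - SA%:R.
    by rewrite /AA sumrB sumr_const natr_sum [X in _ = X - _]mulrC mulr_natr.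
  have E : (#|T1 n l| * dd n + 2 * K = 2 * dd n + 2 * SA)%N.
    apply/eqP; rewrite -(eqr_nat rat) !natrD !natrM; apply/eqP.
    move: Heq; rewrite HA; lra.
  have T1le : forall j, j \in T1 n l -> j != ord_max -> (j <= n)%N.
    by case=> j hj _ /=; rewrite -val_eqE /= => hne; lia.
  have [x Hx] : exists x, K = (val (k i) * aa n i + x * sylv i)%N.
    rewrite /K (bigD1 i) //=; set K' := (\sum_(j | _) _)%N.
    exists (K' %/ sylv i)%N; congr (_ + _)%N; rewrite divnK //.
    apply: dvdn_sum => j /andP[jT jne]; apply: dvdn_mull.
    rewrite aaE ?T0le //; apply: P2 => //; [exact: T0le | by rewrite eq_sym].
  have [y Hy] : exists y, SA = (1 + y * sylv i)%N.
    have mT1 : ord_max \in T1 n l by rewrite inE hlast.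
    rewrite /SA (bigD1 ord_max) //= aaM; set S' := (\sum_(j | _) _)%N.
    exists (S' %/ sylv i)%N; congr (_ + _)%N; rewrite divnK //.
    apply: dvdn_sum => j /andP[jT jne].
    have jn := T1le j jT jne.
    rewrite aaE //; apply: P2 => //.
    apply/eqP => ij; move: jT; rewrite inE -(_ : i = j) ?iT0 //; exact: val_inj.
  have [c Hc] : exists c, (aa n i + 1 = c * sylv i)%N.
    by apply/dvdnP; rewrite aaE // P3.
  have [e He] : exists e, (dd n = e * sylv i)%N.
    by apply/dvdnP; rewrite ddE dvd_sylv_P.
  have kb : (val (k i) <= sylv i - 2)%N.
    by have := Hb i; rewrite iT0 /kbound iln.
  have so := @sylv_odd i ipos.
  have s1 := sylv_gt1 i.
  set m := #|T1 n l| in E.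
  set ki := val (k i) in Hx kb.
  set a := aa n i in Hx Hc.
  set s := sylv i in Hx Hy Hc He kb so s1.
  have hc2 := congr1 (muln ki) Hc.
  have E2 : (s * (m * e + 2 * ki * c + 2 * x) = s * (2 * e + 2 * y) + 2 * (ki + 1))%N.
    rewrite He Hx Hy in E; nia.
  have : (s %| s * (2 * e + 2 * y) + 2 * (ki + 1))%N by rewrite -E2 dvdn_mulr.
  rewrite dvdn_addr; last exact: dvdn_mulr (dvdnn s).
  rewrite Gauss_dvdr ?coprimen2 // => /dvdn_leq; lia.
move=> /existsPn H2.
pose F := fun i : 'I_n.+2 => (dd n)%:R / 2 - (aa n i)%:R : rat.
have Hsa : (\sum_(i < n.+2) aa n i)%N = dd n.
  rewrite big_ord_recr /= aaM.
  rewrite (eq_bigr (fun i : 'I_n.+1 => sylv_prod n %/ sylv i)%N); last first.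
    by move=> i _; rewrite aaE //= -ltnS.
  by rewrite P5 ddE subnK // P_pos.
have Hall : \sum_i F i = (n.+2)%:R * ((dd n)%:R / 2) - (dd n)%:R.
  by rewrite sumrB sumr_const card_ord -natr_sum Hsa [X in _ = X - _]mulrC mulr_natr.
have HT0 : \sum_(i in T0 n l) F i = 0.
  apply: big1 => i iT.
  have i0 : val i = 0%N by have := H2 i; rewrite iT /=; lia.
  rewrite /F aaE ?T0le // i0 /= ddE.
  have h2 : (2 %| sylv_prod n)%N by exact: (@dvd_sylv_P 0 n (leq0n n)).
  have := divnK h2; move: (sylv_prod n %/ 2)%N => q <-.
  by rewrite natrM; field.
have Hsplit : \sum_i F i = \sum_(i in T0 n l) F i + AA n l.
  rewrite (bigID (mem (T0 n l))) /=; congr (_ + _).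
  by rewrite /AA; apply: eq_bigl => j; rewrite /T1 in_setC.
have K0 : 0 <= (K%:R : rat) by rewrite ler0n.
have : ((n.+2 * dd n)%N%:R : rat) <= (4 * dd n)%N%:R.
  rewrite !natrM; move: Hsplit; rewrite Hall HT0; lra.
rewrite ler_nat; nia.
Qed.
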